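(* Let $N\ge2$ be even. For every $s\in(1,m^*_N]$ there exists $\theta_s\in\mathcal G$ with $\langle M_N(\theta_s)\rangle=s$.
   Context: $\mathcal G=(\pi/4,\pi/2)\cup(\pi/2,3\pi/4)\cup(5\pi/4,3\pi/2)\cup(3\pi/2,7\pi/4)$. For $\bm x\in\{0,1\}^N$ let $|\bm x|=\sum_kx_k$ and $c_{\bm x}=\cos\big[\frac\pi2\big(\frac{N-1}2-|\bm x|\big)\big]$. The MABK value of the strategy with state $(|0\rangle^{\otimes N}+i|1\rangle^{\otimes N})/\sqrt2$ and observables $A^{(k)}_0=\sigma_X$, $A^{(k)}_1=\cos\theta\sigma_X+\sin\theta\sigma_Y$ for all $k$ is $\langle M_N(\theta)\rangle:=2^{(1-N)/2}\sum_{\bm x\in\{0,1\}^N}c_{\bm x}\sin(|\bm x|\theta)$ (since the full correlator of this strategy at input $\bm x$ is $\sin(|\bm x|\theta)$); equivalently $\langle M_N(\theta)\rangle=2^{\frac{N-1}2}\big(\cos^N(\theta/2+\pi/4)\sin(N\theta/2+\pi/4)+\cos^N(\theta/2-\pi/4)\sin(N\theta/2-\pi/4)\big)$. $m^*_N:=\langle M_N(\theta^*_N)\rangle$ with $\theta^*_N=2\pi t_N/(N+1)$, where $t_N=N/4+1/2,\ N/4,\ 3N/4+1/2,\ 3N/4+1$ according as $N\equiv2,4,6,0\pmod 8$. *)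

(* Defs.v *)
From Stdlib Require Import Reals Lra Lia List.
Open Scope R_scope.

Fixpoint bitstrings (N : nat) : list (list bool) :=
  match N with
  | O => nil :: nil
  | S n => map (cons false) (bitstrings n) ++ map (cons true) (bitstrings n)
  end.

Definition weight (x : list bool) : nat := count_occ Bool.bool_dec x true.

Definition cx (N : nat) (x : list bool) : R :=
  cos (PI / 2 * ((INR N - 1) / 2 - INR (weight x))).

Definition MABK (N : nat) (theta : R) : R :=
  Rpower 2 ((1 - INR N) / 2) *
  fold_right Rplus 0
    (map (fun x => cx N x * sin (INR (weight x) * theta)) (bitstrings N)).

(* t_N, for N = 2,4,6,0 (mod 8); only used for even N. *)
Definition tN (N : nat) : R :=
  match (N mod 8)%nat with
  | 2%nat => INR N / 4 + 1 / 2
  | 4%nat => INR N / 4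
  | 6%nat => 3 * INR N / 4 + 1 / 2
  | _ => 3 * INR N / 4 + 1
  end.

Definition theta_star (N : nat) : R := 2 * PI * tN N / (INR N + 1).

Definition m_star (N : nat) : R := MABK N (theta_star N).

Definition inG (t : R) : Prop :=
  (PI / 4 < t < PI / 2) \/ (PI / 2 < t < 3 * PI / 4) \/
  (5 * PI / 4 < t < 3 * PI / 2) \/ (3 * PI / 2 < t < 7 * PI / 4).

(* Main.v *)
Require Import Defs.
From Stdlib Require Import Reals Arith Lra Lia List.
Open Scope R_scope.

Definition sumR (l : list R) := fold_right Rplus 0 l.

Lemma sumR_app l1 l2 : sumR (l1 ++ l2) = sumR l1 + sumR l2.
Proof. induction l1; simpl; [ring| unfold sumR in *; simpl; rewrite IHl1; ring]. Qed.

Lemma sumR_ext {A} (f g : A -> R) l : (forall x, f x = g x) -> sumR (map f l) = sumR (map g l).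
Proof. intros H; induction l; simpl; auto. unfold sumR in *; simpl; rewrite IHl, H; auto. Qed.

Lemma sumR_half {A} (f g : A -> R) l :
  sumR (map (fun x => (f x + g x)/2) l) = (sumR (map f l) + sumR (map g l))/2.
Proof. induction l; unfold sumR in *; simpl. field. rewrite IHl. field. Qed.

Lemma weight_f x : weight (false :: x) = weight x.
Proof. reflexivity. Qed.
Lemma weight_t x : weight (true :: x) = S (weight x).
Proof. reflexivity. Qed.

Definition F n psi gam := sumR (map (fun x => sin (INR (weight x) * psi + gam)) (bitstrings n)).

Lemma F_closed n : forall psi gam, F n psi gam = (2 * cos (psi/2))^n * sin (INR n * psi / 2 + gam).
Proof.
  induction n; intros psi gam.
  - unfold F, sumR; simpl. replace (0*psi+gam) with gam by ring. replace (0*psi/2+gam) with gam by field. ring.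
  - unfold F. simpl bitstrings. rewrite map_app, sumR_app, !map_map.
    assert (E1 : sumR (map (fun x => sin (INR (weight (false :: x)) * psi + gam)) (bitstrings n)) = F n psi gam) by reflexivity.
    assert (E2 : sumR (map (fun x => sin (INR (weight (true :: x)) * psi + gam)) (bitstrings n)) = F n psi (gam + psi)).
    { unfold F. apply sumR_ext. intros x. rewrite weight_t, S_INR. f_equal. ring. }
    rewrite E1, E2, !IHn, S_INR.
    replace ((2 * cos (psi / 2)) ^ n * sin (INR n * psi / 2 + gam) + (2 * cos (psi / 2)) ^ n * sin (INR n * psi / 2 + (gam + psi)))
     with ((2 * cos (psi / 2)) ^ n * (sin (INR n * psi / 2 + gam) + sin (INR n * psi / 2 + (gam + psi)))) by ring.
    rewrite form3. simpl.
    replace ((INR n * psi / 2 + gam - (INR n * psi / 2 + (gam + psi))) / 2) with (- (psi/2)) by field.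
    rewrite cos_neg.
    replace ((INR n * psi / 2 + gam + (INR n * psi / 2 + (gam + psi))) / 2) with ((INR n + 1) * psi / 2 + gam) by field.
    ring.
Qed.

Lemma prod_sum u v : cos u * sin v = (sin (v + u) + sin (v - u)) / 2.
Proof. rewrite sin_plus, sin_minus. field. Qed.

Definition g (m : nat) (t : R) : R :=
  sqrt 2 / 2 * ((1 - sin t) ^ m * sin (INR m * t + PI / 4) + (1 + sin t) ^ m * sin (INR m * t - PI / 4)).

Lemma Rpower_half m : Rpower 2 ((1 - INR (2 * m)) / 2) = sqrt 2 / 2 ^ m.
Proof.
  rewrite mult_INR. replace ((1 - INR 2 * INR m) / 2) with (/2 + - INR m) by (simpl; field).
  rewrite Rpower_plus, Rpower_sqrt, Rpower_Ropp, Rpower_pow by lra. field. apply pow_nonzero. lra.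
Qed.

Lemma MABK_closed m t : MABK (2 * m) t = g m t.
Proof.
  unfold MABK.
  set (N := (2*m)%nat).
  assert (H : fold_right Rplus 0 (map (fun x => cx N x * sin (INR (weight x) * t)) (bitstrings N))
     = (F N (t - PI/2) (PI * (INR N - 1) / 4) + F N (t + PI/2) (- (PI * (INR N - 1) / 4))) / 2).
  { unfold F. rewrite <- sumR_half. apply sumR_ext. intros x. unfold cx. rewrite prod_sum.
    f_equal. f_equal; f_equal; field. }
  rewrite H, !F_closed. unfold N. rewrite Rpower_half. unfold g.
  rewrite !pow_mult.
  assert (K : forall a, (2 * cos (a/2))^2 = 2 * (1 + cos a)).
  { intros a. replace a with (2 * (a/2)) at 2 by field. rewrite cos_2a_cos. ring. }
  rewrite !K.
  assert (C1 : cos (t - PI/2) = sin t).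
  { rewrite cos_minus, cos_PI2, sin_PI2. ring. }
  assert (C2 : cos (t + PI/2) = - sin t).
  { rewrite cos_plus, cos_PI2, sin_PI2. ring. }
  rewrite C1, C2, !Rpow_mult_distr, mult_INR.
  replace (INR 2 * INR m * (t - PI / 2) / 2 + PI * (INR 2 * INR m - 1) / 4) with (INR m * t - PI/4) by (simpl; field).
  replace (INR 2 * INR m * (t + PI / 2) / 2 + - (PI * (INR 2 * INR m - 1) / 4)) with (INR m * t + PI/4) by (simpl; field).
  replace (1 + - sin t) with (1 - sin t) by ring.
  field. apply pow_nonzero. lra.
Qed.

Lemma g_cont m : continuity (g m).
Proof. unfold g. reg. Qed.

Lemma g_np m t (j : nat) b : INR m * t = b + 2 * INR j * PI -> 5*PI/4 <= b <= 7*PI/4 -> g m t <= 0.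
Proof.
  intros E Hb. unfold g. rewrite E.
  replace (b + 2 * INR j * PI + PI / 4) with ((b + PI/4) + 2 * INR j * PI) by ring.
  replace (b + 2 * INR j * PI - PI / 4) with ((b + - (PI/4)) + 2 * INR j * PI) by ring.
  rewrite !sin_period.
  pose proof PI_RGT_0.
  assert (S1 : sin (b + PI/4) <= 0) by (apply sin_le_0; lra).
  assert (S2 : sin (b + - (PI/4)) <= 0) by (apply sin_le_0; lra).
  pose proof (SIN_bound t).
  assert (P1 : 0 <= (1 - sin t)^m) by (apply pow_le; lra).
  assert (P2 : 0 <= (1 + sin t)^m) by (apply pow_le; lra).
  assert (Q : 0 <= sqrt 2 / 2) by (pose proof (sqrt_pos 2); lra).
  assert (0 <= (1 - sin t)^m * - sin (b + PI/4) + (1 + sin t)^m * - sin (b + - (PI/4))).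
  { apply Rplus_le_le_0_compat; apply Rmult_le_pos; lra. }
  nra.
Qed.

Lemma finish2 m lo hi a b s : lo <= a <= hi -> lo <= b <= hi -> g m a < s -> s <= g m b ->
  (b = lo -> s < g m b) -> (b = hi -> s < g m b) ->
  exists z, lo < z < hi /\ g m z = s.
Proof.
  intros Ha Hb Hga Hgb Hlo Hhi.
  set (f := fun t => g m t - s).
  assert (Cf : continuity f).
  { unfold f. apply continuity_minus. apply g_cont. apply continuity_const. intros x y; reflexivity. }
  destruct (Rle_dec a b) as [Hab|Hab].
  - destruct (IVT_cor f a b Cf Hab) as [z [Hz Ez]].
    { unfold f. assert (g m a - s < 0) by lra. assert (0 <= g m b - s) by lra. nra. }
    unfold f in Ez. exists z. split; [|lra].
    assert (z <> a) by (intro; subst; lra).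
    split.
    + destruct (Req_dec z lo); [|lra]. subst. lra.
    + destruct (Req_dec z hi); [|lra]. subst z. assert (Eb : b = hi) by lra. specialize (Hhi Eb). subst b. lra.
  - assert (Hba : b <= a) by lra.
    destruct (IVT_cor f b a Cf Hba) as [z [Hz Ez]].
    { unfold f. assert (g m a - s < 0) by lra. assert (0 <= g m b - s) by lra. nra. }
    unfold f in Ez. exists z. split; [|lra].
    assert (z <> a) by (intro; subst; lra).
    split.
    + destruct (Req_dec z lo); [|lra]. subst z. assert (Eb : b = lo) by lra. specialize (Hlo Eb). subst b. lra.
    + destruct (Req_dec z hi); [|lra]. subst. lra.
Qed.

Lemma mod8 r k : (r < 8)%nat -> ((r + k*8) mod 8 = r)%nat.
Proof. intros. rewrite Nat.Div0.mod_add. apply Nat.mod_small; auto. Qed.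

Lemma case_a k s : (1 <= k)%nat -> 1 < s <= g (4*k+1) (theta_star (2*(4*k+1))) ->
  exists z, inG z /\ g (4*k+1) z = s.
Proof.
  intros Hk Hs.
  assert (HK : 1 <= INR k) by (apply (le_INR 1); lia).
  assert (Em : INR (4*k+1) = 4*INR k+1) by (rewrite plus_INR, mult_INR; simpl; ring).
  assert (EN : INR (2*(4*k+1)) = 8*INR k+2) by (rewrite mult_INR, Em; simpl; ring).
  assert (M8 : ((2*(4*k+1)) mod 8 = 2)%nat).
  { replace (2*(4*k+1))%nat with (2 + k*8)%nat by lia. apply mod8; lia. }
  set (K := INR k) in *.
  pose proof PI_RGT_0.
  set (qb := (4*K+2)/(8*K+3)).
  assert (Eb : theta_star (2*(4*k+1)) = PI * qb).
  { unfold theta_star, tN. rewrite M8, EN. unfold qb. field. lra. }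
  assert (Hqb : qb * (8*K+3) = 4*K+2) by (unfold qb; field; lra).
  set (qa := (4*K+3)/(8*K+2)).
  assert (Hqa : qa * (8*K+2) = 4*K+3) by (unfold qa; field; lra).
  assert (Ph : INR (4*k+1) * (PI * qa) = 3*PI/2 + 2 * INR k * PI).
  { rewrite Em. fold K. unfold qa. field. lra. }
  assert (Ga : g (4*k+1) (PI*qa) <= 0) by (apply (g_np _ _ k (3*PI/2)); [exact Ph| lra]).
  rewrite Eb in Hs.
  assert (qa1 : 1/2 <= qa <= 3/4) by nra.
  assert (qb1 : 1/2 < qb < 3/4) by nra.
  destruct (finish2 (4*k+1) (PI/2) (3*PI/4) (PI*qa) (PI*qb) s) as [z [Hz Ez]];
    try nra; try (intros; nra).
  exists z. split; auto. unfold inG. lra.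
Qed.

Lemma case_c k s : (1 <= k)%nat -> 1 < s <= g (4*k+2) (theta_star (2*(4*k+2))) ->
  exists z, inG z /\ g (4*k+2) z = s.
Proof.
  intros Hk Hs.
  destruct k as [|k']; [lia|].
  assert (HK : 0 <= INR k') by apply pos_INR.
  assert (Em : INR (4*S k'+2) = 4*INR k'+6) by (rewrite plus_INR, mult_INR, (S_INR k'); simpl; ring).
  assert (EN : INR (2*(4*S k'+2)) = 8*INR k'+12) by (rewrite mult_INR, Em; simpl; ring).
  assert (M8 : ((2*(4*S k'+2)) mod 8 = 4)%nat).
  { replace (2*(4*S k'+2))%nat with (4 + (S k')*8)%nat by lia. apply mod8; lia. }
  set (K := INR k') in *.
  pose proof PI_RGT_0.
  set (qb := (4*K+6)/(8*K+13)).
  assert (Eb : theta_star (2*(4*S k'+2)) = PI * qb).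
  { unfold theta_star, tN. rewrite M8, EN. unfold qb. field. lra. }
  assert (Hqb : qb * (8*K+13) = 4*K+6) by (unfold qb; field; lra).
  set (qa := (4*K+3)/(8*K+12)).
  assert (Hqa : qa * (8*K+12) = 4*K+3) by (unfold qa; field; lra).
  assert (Ph : INR (4*S k'+2) * (PI * qa) = 3*PI/2 + 2 * INR k' * PI).
  { rewrite Em. fold K. unfold qa. field. lra. }
  assert (Ga : g (4*S k'+2) (PI*qa) <= 0) by (apply (g_np _ _ k' (3*PI/2)); [exact Ph| lra]).
  rewrite Eb in Hs.
  assert (qa1 : 1/4 <= qa <= 1/2) by nra.
  assert (qb1 : 1/4 < qb < 1/2) by nra.
  destruct (finish2 (4*S k'+2) (PI/4) (PI/2) (PI*qa) (PI*qb) s) as [z [Hz Ez]];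
    try nra; try (intros; nra).
  exists z. split; auto. unfold inG. lra.
Qed.

Lemma case_e k s : 1 < s <= g (4*k+3) (theta_star (2*(4*k+3))) ->
  exists z, inG z /\ g (4*k+3) z = s.
Proof.
  intros Hs.
  assert (HK : 0 <= INR k) by apply pos_INR.
  assert (Em : INR (4*k+3) = 4*INR k+3) by (rewrite plus_INR, mult_INR; simpl; ring).
  assert (EN : INR (2*(4*k+3)) = 8*INR k+6) by (rewrite mult_INR, Em; simpl; ring).
  assert (M8 : ((2*(4*k+3)) mod 8 = 6)%nat).
  { replace (2*(4*k+3))%nat with (6 + k*8)%nat by lia. apply mod8; lia. }
  assert (Ej : INR (3*k+1) = 3*INR k+1) by (rewrite plus_INR, mult_INR; simpl; ring).
  set (K := INR k) in *.
  pose proof PI_RGT_0.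
  set (qb := (12*K+10)/(8*K+7)).
  assert (Eb : theta_star (2*(4*k+3)) = PI * qb).
  { unfold theta_star, tN. rewrite M8, EN. unfold qb. field. lra. }
  assert (Hqb : qb * (8*K+7) = 12*K+10) by (unfold qb; field; lra).
  set (qa := (24*K+15)/(16*K+12)).
  assert (Hqa : qa * (16*K+12) = 24*K+15) by (unfold qa; field; lra).
  assert (Ph : INR (4*k+3) * (PI * qa) = 7*PI/4 + 2 * INR (3*k+1) * PI).
  { rewrite Em, Ej. unfold qa. field. lra. }
  assert (Ga : g (4*k+3) (PI*qa) <= 0) by (apply (g_np _ _ (3*k+1) (7*PI/4)); [exact Ph| lra]).
  rewrite Eb in Hs.
  assert (qa1 : 5/4 <= qa <= 3/2) by nra.
  assert (qb1 : 5/4 < qb < 3/2) by nra.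
  destruct (finish2 (4*k+3) (5*PI/4) (3*PI/2) (PI*qa) (PI*qb) s) as [z [Hz Ez]];
    try nra; try (intros; nra).
  exists z. split; auto. unfold inG. lra.
Qed.

Lemma case_f k s : (2 <= k)%nat -> 1 < s <= g (4*k) (theta_star (2*(4*k))) ->
  exists z, inG z /\ g (4*k) z = s.
Proof.
  intros Hk Hs.
  assert (HK : 2 <= INR k) by (apply (le_INR 2); lia).
  assert (Em : INR (4*k) = 4*INR k) by (rewrite mult_INR; simpl; ring).
  assert (EN : INR (2*(4*k)) = 8*INR k) by (rewrite mult_INR, Em; simpl; ring).
  assert (M8 : ((2*(4*k)) mod 8 = 0)%nat).
  { replace (2*(4*k))%nat with (0 + k*8)%nat by lia. apply mod8; lia. }
  assert (Ej : INR (3*k) = 3*INR k) by (rewrite mult_INR; simpl; ring).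
  set (K := INR k) in *.
  pose proof PI_RGT_0.
  set (qb := (12*K+2)/(8*K+1)).
  assert (Eb : theta_star (2*(4*k)) = PI * qb).
  { unfold theta_star, tN. rewrite M8, EN. unfold qb. field. lra. }
  assert (Hqb : qb * (8*K+1) = 12*K+2) by (unfold qb; field; lra).
  set (qa := (12*K+3)/(8*K)).
  assert (Hqa : qa * (8*K) = 12*K+3) by (unfold qa; field; lra).
  assert (Ph : INR (4*k) * (PI * qa) = 3*PI/2 + 2 * INR (3*k) * PI).
  { rewrite Em, Ej. unfold qa. field. lra. }
  assert (Ga : g (4*k) (PI*qa) <= 0) by (apply (g_np _ _ (3*k) (3*PI/2)); [exact Ph| lra]).
  rewrite Eb in Hs.
  assert (qa1 : 3/2 <= qa <= 7/4) by nra.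
  assert (qb1 : 3/2 < qb < 7/4) by nra.
  destruct (finish2 (4*k) (3*PI/2) (7*PI/4) (PI*qa) (PI*qb) s) as [z [Hz Ez]];
    try nra; try (intros; nra).
  exists z. split; auto. unfold inG. lra.
Qed.

Lemma sqrt2_facts : sqrt 2 * sqrt 2 = 2 /\ 0 < sqrt 2.
Proof. split. apply sqrt_sqrt; lra. apply sqrt_lt_R0; lra. Qed.

Lemma case_2 s : 1 < s <= g 1 (theta_star (2*1)) -> exists z, inG z /\ g 1 z = s.
Proof.
  intros Hs. pose proof PI_RGT_0. destruct sqrt2_facts as [R2 Rp].
  assert (Eb : theta_star (2*1) = 2*PI/3).
  { unfold theta_star, tN. simpl. field. }
  assert (Ga : g 1 (PI/2) = 1).
  { unfold g. rewrite sin_PI2. replace (INR 1 * (PI/2) - PI/4) with (PI/4) by (simpl; field).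
    rewrite sin_PI4. simpl. field. lra. }
  rewrite Eb in Hs.
  destruct (finish2 1 (PI/2) (3*PI/4) (PI/2) (2*PI/3) s) as [z [Hz Ez]]; try lra.
  exists z. split; auto. unfold inG. lra.
Qed.

Lemma case_4 s : 1 < s <= g 2 (theta_star (2*2)) -> exists z, inG z /\ g 2 z = s.
Proof.
  intros Hs. pose proof PI_RGT_0. destruct sqrt2_facts as [R2 Rp].
  assert (Eb : theta_star (2*2) = 2*PI/5).
  { unfold theta_star, tN. simpl. field. }
  assert (G1 : g 2 (PI/2) = 2).
  { unfold g. rewrite sin_PI2. replace (INR 2 * (PI/2) - PI/4) with (PI - PI/4) by (simpl; field).
    rewrite sin_PI_x, sin_PI4. simpl. field. lra. }
  assert (G2 : g 2 (PI/4) = 3/2).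
  { unfold g. replace (INR 2 * (PI/4) - PI/4) with (PI/4) by (simpl; field).
    replace (INR 2 * (PI/4) + PI/4) with (PI - PI/4) by (simpl; field).
    rewrite sin_PI_x, sin_PI4. simpl. field_simplify; [|lra]. 
    replace (sqrt 2 ^ 4) with 4 by (simpl; nra). replace (sqrt 2 ^ 2) with 2 by (simpl; nra). field. }
  assert (G3 : g 2 (3*PI/4) <= 0).
  { apply (g_np _ _ 0 (3*PI/2)); [simpl; field | lra]. }
  rewrite Eb in Hs.
  destruct (Rlt_dec s 2) as [Hs2|Hs2].
  - destruct (finish2 2 (PI/2) (3*PI/4) (3*PI/4) (PI/2) s) as [z [Hz Ez]]; try lra.
    exists z. split; auto. unfold inG. lra.
  - destruct (finish2 2 (PI/4) (PI/2) (PI/4) (2*PI/5) s) as [z [Hz Ez]]; try lra.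
    exists z. split; auto. unfold inG. lra.
Qed.

Lemma case_8 s : 1 < s <= g 4 (theta_star (2*4)) -> exists z, inG z /\ g 4 z = s.
Proof.
  intros Hs. pose proof PI_RGT_0. destruct sqrt2_facts as [R2 Rp].
  assert (Eb : theta_star (2*4) = 14*PI/9).
  { unfold theta_star, tN. simpl. field. }
  assert (S1 : sin (7*PI/4) = - (1/sqrt 2)).
  { replace (7*PI/4) with (- (PI/4) + 2 * INR 1 * PI) by (simpl; field).
    rewrite sin_period, sin_neg, sin_PI4. ring. }
  assert (S2 : sin (INR 4 * (7*PI/4) + PI/4) = - (1/sqrt 2)).
  { replace (INR 4 * (7*PI/4) + PI/4) with ((PI/4 + PI) + 2 * INR 3 * PI) by (simpl; field).
    rewrite sin_period, neg_sin, sin_PI4. ring. }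
  assert (S3 : sin (INR 4 * (7*PI/4) - PI/4) = 1/sqrt 2).
  { replace (INR 4 * (7*PI/4) - PI/4) with ((PI - PI/4) + 2 * INR 3 * PI) by (simpl; field).
    rewrite sin_period, sin_PI_x, sin_PI4. ring. }
  assert (Ga : g 4 (7*PI/4) <= 0).
  { unfold g. rewrite S1, S2, S3.
    set (a := 1 / sqrt 2).
    assert (Ha : 0 < a < 1).
    { unfold a. split. apply Rdiv_lt_0_compat; lra.
      apply (Rmult_lt_reg_r (sqrt 2)); auto. field_simplify; nra. }
    assert (P : (1 - a)^4 <= (1 + a)^4).
    { apply pow_incr. lra. }
    replace (1 - - a) with (1 + a) by ring. replace (1 + - a) with (1 - a) by ring.
    assert (0 <= sqrt 2 / 2) by lra.
    assert (0 <= a * ((1 + a)^4 - (1 - a)^4)) by (apply Rmult_le_pos; lra).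
    nra. }
  rewrite Eb in Hs.
  destruct (finish2 4 (3*PI/2) (7*PI/4) (7*PI/4) (14*PI/9) s) as [z [Hz Ez]]; try lra.
  exists z. split; auto. unfold inG. lra.
Qed.

Theorem proposition4 (N : nat) (HN : (2 <= N)%nat) (Heven : Nat.Even N) :
  forall s : R, 1 < s <= m_star N ->
  exists theta_s : R, inG theta_s /\ MABK N theta_s = s.
Proof.
  intros s Hs. destruct Heven as [m Hm]. subst N.
  assert (Hstar : m_star (2*m) = g m (theta_star (2*m))) by (unfold m_star; apply MABK_closed).
  rewrite Hstar in Hs.
  assert (Hg : (exists z, inG z /\ g m z = s) -> exists z, inG z /\ MABK (2*m) z = s).
  { intros [z [Hz Ez]]. exists z. rewrite MABK_closed. auto. }
  apply Hg.
  assert (D : exists k j, m = (4*k + j)%nat /\ (j < 4)%nat).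
  { exists (m/4)%nat, (m mod 4)%nat. split. apply Nat.div_mod; lia. apply Nat.mod_upper_bound; lia. }
  destruct D as [k [j [Ek Hj]]]. subst m.
  destruct j as [|[|[|[|j]]]]; try lia.
  - rewrite Nat.add_0_r in *. destruct k as [|[|k]]; try lia.
    + apply case_8. exact Hs.
    + apply case_f; [lia| exact Hs].
  - destruct k as [|k].
    + apply case_2. exact Hs.
    + apply case_a; [lia| exact Hs].
  - destruct k as [|k].
    + apply case_4. exact Hs.
    + apply case_c; [lia| exact Hs].
  - apply case_e. exact Hs.
Qed.
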